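(* The following are equivalent: (1) $b=0$; (2) either $R$ is Gorenstein (i.e. $r=1$), or $v(R)=\{0,e,2e,\dots,pe\}\cup\{m\in\mathbb Z:m\ge(p+1)e\}$ for some integer $p$; (3) the type sequence of $R$ is $[r,\dots,r]$.
   Context: Let $(R,\mathfrak m)$ be a one-dimensional local Noetherian domain with quotient field $K$, not regular, analytically irreducible (the integral closure $\overline R$ of $R$ in $K$ is a DVR and a finite $R$-module) and residually rational. Let $v$ be the valuation of $\overline R$ normalized so a uniformizer has value 1, $v(R)=\{v(a):a\in R\setminus\{0\}\}$, $c$ the least element of $v(R)$ with $c+\mathbb N\subseteq v(R)$, $\delta=\ell_R(\overline R/R)$, $r=\ell_R((R:_K\mathfrak m)/R)$, $b=(c-\delta)r-\delta$, $e$ the least positive element of $v(R)$, $n=c-\delta$. Write $v(R)=\{s_0=0<s_1<\cdots\}$, $R_i=\{a\in R:v(a)\ge s_i\}$, $r_i=\ell_R((R:_KR_i)/(R:_KR_{i-1}))$; the type sequence is $[r_1,\dots,r_n]$. *)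

(* Defs.v *)
From mathcomp Require Import all_boot all_order all_algebra.
Set Implicit Arguments. Unset Strict Implicit. Unset Printing Implicit Defensive.
Import Order.TTheory GRing.Theory Num.Theory.
Local Open Scope ring_scope.

Section Defs.
Variable K : fieldType.
Implicit Types (R M N I P : K -> Prop).

Definition subring R :=
  R 0 /\ R 1 /\ (forall x y, R x -> R y -> R (x - y)) /\
  (forall x y, R x -> R y -> R (x * y)).

Definition submod R M :=
  M 0 /\ (forall x y, M x -> M y -> M (x + y)) /\
  (forall a x, R a -> M x -> M (a * x)).

Definition is_ideal R I := submod R I /\ (forall x, I x -> R x).

Definition rspan R (s : seq K) : K -> Prop := fun x =>
  exists c : nat -> K, (forall i, R (c i)) /\ x = \sum_(i < size s) c i * s`_i.

Definition maxideal R : K -> Prop := fun a => R a /\ ~ (a != 0 /\ R a^-1).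

Definition is_local R := forall x y, maxideal R x -> maxideal R y -> maxideal R (x + y).

Definition noetherian R :=
  forall I, is_ideal R I -> exists s : seq K,
    (forall x, x \in s -> I x) /\ (forall x, I x <-> rspan R s x).

Definition prime_ideal R P :=
  is_ideal R P /\ ~ P 1 /\
  (forall a b, R a -> R b -> P (a * b) -> P a \/ P b).

Definition strict_incl (P Q : K -> Prop) :=
  (forall x, P x -> Q x) /\ exists x, Q x /\ ~ P x.

Definition krull_dim_one R :=
  (exists P Q, prime_ideal R P /\ prime_ideal R Q /\ strict_incl P Q) /\
  ~ (exists P Q S, prime_ideal R P /\ prime_ideal R Q /\ prime_ideal R S /\
        strict_incl P Q /\ strict_incl Q S).

Definition is_quotient_field R :=
  forall x, exists a b, R a /\ R b /\ b != 0 /\ x = a / b.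

Definition intcl R : K -> Prop := fun x =>
  exists p : {poly K}, p \is monic /\ (forall i, R p`_i) /\ root p x.

(* v is a normalized discrete valuation of K (values on nonzero elements) *)
Definition normalized_dvaluation (v : K -> int) :=
  (forall x y, x != 0 -> y != 0 -> v (x * y) = v x + v y) /\
  (forall x y, x != 0 -> y != 0 -> x + y != 0 -> Num.min (v x) (v y) <= v (x + y)) /\
  (exists t, t != 0 /\ v t = 1).

(* regular = the maximal ideal is principal (R has dimension one) *)
Definition regular R :=
  exists t, forall x, maxideal R x <-> exists a, R a /\ x = a * t.

Definition strict_chain R N M (n : nat) (f : nat -> K -> Prop) :=
  (forall x, f 0%N x <-> N x) /\ (forall x, f n x <-> M x) /\
  (forall i, (i <= n)%N -> submod R (f i)) /\
  (forall i, (i < n)%N -> strict_incl (f i) (f i.+1)).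

Definition length_eq R N M (n : nat) :=
  (exists f, strict_chain R N M n f) /\
  (forall k f, strict_chain R N M k f -> (k <= n)%N).

Definition colon R I : K -> Prop := fun x => forall a, I a -> R (x * a).

Definition valR R (v : K -> int) : nat -> Prop := fun k =>
  exists a, R a /\ a != 0 /\ v a = k%:Z.

Definition is_conductor (S : nat -> Prop) (c : nat) :=
  S c /\ (forall k, S (c + k)%N) /\
  (forall c', S c' -> (forall k, S (c' + k)%N) -> (c <= c')%N).

Definition is_multiplicity (S : nat -> Prop) (e : nat) :=
  S e /\ (0 < e)%N /\ (forall k, S k -> (0 < k)%N -> (e <= k)%N).

(* x = s_i, the i-th element (from 0) of S in increasing order *)
Definition is_sval (S : nat -> Prop) (i x : nat) :=
  S x /\ exists l : seq nat, uniq l /\ size l = i /\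
    (forall k, k \in l <-> (S k /\ (k < x)%N)).

Definition Rsub R (v : K -> int) (i : nat) : K -> Prop := fun a =>
  R a /\ (a = 0 \/ exists x, is_sval (valR R v) i x /\ x%:Z <= v a).

End Defs.

(* Main.v *)
Require Import Defs.
From mathcomp Require Import all_boot all_order all_algebra.
From mathcomp Require Import boolp.
From mathcomp Require Import zify ring lra.
Import Order.TTheory GRing.Theory Num.Theory.
Local Open Scope ring_scope.
Set Implicit Arguments. Unset Strict Implicit. Unset Printing Implicit Defensive.
Record Hyp (K : fieldType) (R : K -> Prop) (v : K -> int) : Prop := mkHyp {
  H_sub : subring R;
  H_val : normalized_dvaluation v;
  H_ic : forall x, intcl R x <-> (x = 0 \/ 0 <= v x);
  H_res : forall x, intcl R x -> exists a, R a /\ (x - a = 0 \/ 1 <= v (x - a)) }.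

Lemma vM (K : fieldType) (v : K -> int) : normalized_dvaluation v ->
  forall x y, x != 0 -> y != 0 -> v (x * y) = v x + v y.
Proof. by case. Qed.

Lemma v1 (K : fieldType) (v : K -> int) : normalized_dvaluation v -> v 1 = 0.
Proof.
move=> hv; have o : (1:K) != 0 by rewrite oner_eq0.
have := vM hv o o; rewrite mulr1.
by move=> h; clear - h; lia.
Qed.

Lemma vV (K : fieldType) (v : K -> int) : normalized_dvaluation v ->
  forall x, x != 0 -> v x^-1 = - v x.
Proof.
move=> hv x x0; have := vM hv x0 (invr_neq0 x0); rewrite mulfV // v1 //.
by move=> h; clear - h; lia.
Qed.

Lemma vN (K : fieldType) (v : K -> int) : normalized_dvaluation v ->
  forall x, v (- x) = v x.
Proof.
move=> hv x; have m10 : (-1 : K) != 0 by rewrite oppr_eq0 oner_neq0.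
have h1 : v (-1) = 0.
  have := vM hv m10 m10; rewrite mulrNN mulr1 v1 //; move=> h; clear - h; lia.
have [->|x0] := eqVneq x 0; first by rewrite oppr0.
by rewrite -mulN1r vM // h1 add0r.
Qed.

Lemma vD (K : fieldType) (v : K -> int) : normalized_dvaluation v ->
  forall x y, x != 0 -> y != 0 -> x + y != 0 -> Num.min (v x) (v y) <= v (x + y).
Proof. by case=> _ []. Qed.

Lemma vD_ge (K : fieldType) (v : K -> int) : normalized_dvaluation v ->
  forall (m : int) x y, x != 0 -> y != 0 -> x + y != 0 -> m <= v x -> m <= v y -> m <= v (x + y).
Proof.
move=> hv m x y x0 y0 s0 hx hy; apply: le_trans (vD hv x0 y0 s0).
by rewrite le_min hx hy.
Qed.

Lemma vD_strict (K : fieldType) (v : K -> int) : normalized_dvaluation v ->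
  forall x y, x != 0 -> y != 0 -> v x < v y -> x + y != 0 /\ v (x + y) = v x.
Proof.
move=> hv x y x0 y0 lt.
have s0 : x + y != 0.
  apply/negP => /eqP h; have : y = - x by apply/eqP; rewrite -addr_eq0 addrC h.
  by move=> yx; move: lt; rewrite yx vN // ltxx.
split=> //.
have h1 := vD hv x0 y0 s0.
have ny0 : - y != 0 by rewrite oppr_eq0.
have e : (x + y) + - y = x by rewrite addrK.
have x0' : (x + y) + - y != 0 by rewrite e.
have h2 := vD hv s0 ny0 x0'.
rewrite e vN // in h2.
move: h1 h2; rewrite /Num.min.
case: ifP => [a|a]; case: ifP => [b|b] => h1 h2; clear - a b h1 h2 lt; lia.
Qed.

Lemma vX (K : fieldType) (v : K -> int) : normalized_dvaluation v ->
  forall x (k : nat), x != 0 -> v (x ^+ k) = (k%:Z * v x).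
Proof.
move=> hv x k x0; elim: k => [|k IH]; first by rewrite expr0 v1 // mul0r.
rewrite exprS vM // ?expf_neq0 // IH; clear; lia.
Qed.

Lemma v_exists (K : fieldType) (v : K -> int) : normalized_dvaluation v ->
  forall k : int, exists y, y != 0 /\ v y = k.
Proof.
move=> hv k; case: (hv) => _ [_ [t [t0 vt]]].
case: k => [n|n].
  exists (t ^+ n); split; first by rewrite expf_neq0.
  by rewrite vX // vt mulr1.
exists (t ^+ n.+1)^-1; split; first by rewrite invr_neq0 // expf_neq0.
rewrite vV ?expf_neq0 // vX // vt mulr1 NegzE //.
Qed.
Lemma R0 (K : fieldType) (R : K -> Prop) : subring R -> R 0.
Proof. by case. Qed.
Lemma R1 (K : fieldType) (R : K -> Prop) : subring R -> R 1.
Proof. by case=> _ []. Qed.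
Lemma RB (K : fieldType) (R : K -> Prop) : subring R -> forall x y, R x -> R y -> R (x - y).
Proof. by case=> _ [_ []]. Qed.
Lemma RM (K : fieldType) (R : K -> Prop) : subring R -> forall x y, R x -> R y -> R (x * y).
Proof. by case=> _ [_ []]. Qed.
Lemma RN (K : fieldType) (R : K -> Prop) : subring R -> forall x, R x -> R (- x).
Proof. move=> h x rx; rewrite -sub0r; apply: RB => //; exact: R0. Qed.
Lemma RD (K : fieldType) (R : K -> Prop) : subring R -> forall x y, R x -> R y -> R (x + y).
Proof. move=> h x y rx ry; rewrite -[y]opprK; apply: RB => //; exact: RN. Qed.

Lemma Rsum (K : fieldType) (R : K -> Prop) : subring R ->
  forall (I : Type) (r : seq I) (P : pred I) (F : I -> K),
  (forall i, P i -> R (F i)) -> R (\sum_(i <- r | P i) F i).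
Proof.
move=> h I r P F hF; apply: (big_ind R) => //.
- exact: (R0 h).
- exact: (RD h).
Qed.

Lemma R_ic (K : fieldType) (R : K -> Prop) (v : K -> int) : Hyp R v ->
  forall x, R x -> x = 0 \/ 0 <= v x.
Proof.
move=> H x rx; apply/(H_ic H); exists ('X - x%:P); split; first exact: monicXsubC.
split; last by rewrite /root hornerXsubC subrr.
move=> i; rewrite coefB coefX coefC.
case: i => [|[|i]] /=; rewrite ?sub0r ?subr0.
- apply: RN (H_sub H) _ rx.
- exact: R1 (H_sub H).
- rewrite oppr0; exact: R0 (H_sub H).
Qed.

Lemma R_unit (K : fieldType) (R : K -> Prop) (v : K -> int) : Hyp R v ->
  forall a, R a -> a != 0 -> v a = 0 -> R a^-1.
Proof.
move=> H a ra a0 va.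
have hv := H_val H; have hs := H_sub H.
have : intcl R a^-1 by apply/(H_ic H); right; rewrite vV // va.
case=> p [mp [cp rp]].
set y := a^-1.
have ya : y * a = 1 by rewrite mulVf.
have lc : lead_coef p = 1 by apply/monicP.
have sz : (1 < size p)%N.
  case: (ltnP 1 (size p)) => // h.
  have : size p = 1%N.
    have : p != 0 by apply: monic_neq0.
    rewrite -size_poly_eq0; case: (size p) h => [|[|]] //.
  move=> s1; move: rp; rewrite /root.
  rewrite (size1_polyC (eq_leq s1)) hornerC.
  by move: lc; rewrite /lead_coef s1 /= => ->; rewrite oner_eq0.
move: rp; rewrite /root horner_coef.
move: lc; rewrite /lead_coef.
case E : (size p) sz => [|[|d]] // _ lc.
rewrite big_ord_recr /= lc mul1r => /eqP h.
have := congr1 (fun z => z * a ^+ d) h.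
rewrite mul0r mulrDl.
have -> : y ^+ d.+1 * a ^+ d = y.
  by rewrite exprS -mulrA -exprMn ya expr1n mulr1.
rewrite mulr_suml.
have hterm : forall i : 'I_d.+1, p`_i * y ^+ i * a ^+ d = p`_i * a ^+ (d - i).
  move=> i; have hi : (i <= d)%N by rewrite -ltnS.
  rewrite -mulrA; congr (_ * _).
  move: (nat_of_ord i) hi => j hj.
  have {1}-> : d = (d - j + j)%N by rewrite subnK.
  by rewrite exprD mulrCA -exprMn ya expr1n mulr1.
under eq_bigr => i _ do rewrite hterm.
move=> h2.
have -> : y = - \sum_(i < d.+1) p`_i * a ^+ (d - i).
  by apply/eqP; rewrite -addr_eq0 addrC h2.
apply: (RN hs); apply: (Rsum hs) => i _.
apply: (RM hs (cp _)).
elim: (d - i)%N => [|k IH]; first by rewrite expr0; exact: R1.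
by rewrite exprS; apply: RM.
Qed.

Lemma m_val (K : fieldType) (R : K -> Prop) (v : K -> int) : Hyp R v ->
  forall a, maxideal R a -> a != 0 -> 1 <= v a.
Proof.
move=> H a [ra nu] a0.
case: (R_ic H ra) => [/eqP|h]; first by rewrite (negbTE a0).
have [h0|hn] := eqVneq (v a) 0.
  by exfalso; apply: nu; split => //; apply: (R_unit H) => //.
clear -h hn; lia.
Qed.

Lemma m_of_val (K : fieldType) (R : K -> Prop) (v : K -> int) : Hyp R v ->
  forall a, R a -> (a = 0 \/ 1 <= v a) -> maxideal R a.
Proof.
move=> H a ra h; split => // [[a0 ri]].
case: h => [e|h]; first by move: a0; rewrite e eqxx.
case: (R_ic H ri) => [/eqP|h2]; first by rewrite invr_eq0 (negbTE a0).
move: h2; rewrite (vV (H_val H)) //; move=> h2; clear -h h2; lia.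
Qed.
Definition Cc (K : fieldType) (v : K -> int) (N : nat) : K -> Prop :=
  fun x => x = 0 \/ N%:Z <= v x.

Lemma int_nat (z : int) : 0 <= z -> exists k : nat, z = k%:Z.
Proof. by case: z => n // _; exists n. Qed.

Lemma smB (K : fieldType) (R M : K -> Prop) : subring R -> submod R M ->
  forall a x y, R a -> M x -> M y -> M (x - a * y).
Proof.
move=> hs [m0 [mD mM]] a x y ra mx my.
rewrite -mulNr; apply: mD => //; apply: mM => //; exact: RN.
Qed.

Lemma approx (K : fieldType) (R : K -> Prop) (v : K -> int) : Hyp R v ->
  forall (N : nat) (I J : K -> Prop), submod R I -> submod R J ->
  (forall x, J x -> I x) ->
  (forall x, I x -> x = 0 \/ 0 <= v x) ->
  (forall x, Cc v N x -> J x) ->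
  (forall k, (k < N)%N -> valR I v k -> valR J v k) ->
  forall x, I x -> J x.
Proof.
move=> H N I J sI sJ JI Ip CJ hV.
have hv := H_val H; have hs := H_sub H.
have key : forall m x, I x -> x != 0 -> (N - m)%:Z <= v x -> J x.
  elim=> [|m IH] x Ix x0 hx.
    by apply: CJ; right; rewrite subn0 in hx.
  have [hx2|hx2] := boolP ((N - m)%:Z <= v x); first exact: IH.
  have vx0 : 0 <= v x by case: (Ip x Ix) => // e; move: x0; rewrite e eqxx.
  have [k hk] := int_nat vx0.
  have kN : (k < N)%N by move: hx hx2; rewrite hk; clear; lia.
  have kE : (N - m)%N = k.+1 by move: hx hx2; rewrite hk; clear; lia.
  have [y [Jy [y0 vy]]] := hV k kN (ex_intro _ x (conj Ix (conj x0 hk))).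
  have z0 : x / y != 0 by rewrite mulf_neq0 // invr_neq0.
  have vz : v (x / y) = 0 by rewrite vM // ?invr_neq0 // vV // vy hk subrr.
  have iz : intcl R (x / y) by apply/(H_ic H); right; rewrite vz.
  have [a [ra ha]] := H_res H iz.
  have [ha0|za0] := eqVneq (x / y - a) 0.
    have -> : x = a * y.
      by move/eqP: ha0; rewrite subr_eq0 => /eqP <-; rewrite mulfVK.
    by case: sJ => _ [_ mM]; apply: mM.
  have {}ha : 1 <= v (x / y - a) by case: ha => // e; move: za0; rewrite e eqxx.
  have ex : x - a * y = y * (x / y - a).
    by rewrite mulrBr mulrCA mulfV // mulr1 mulrC.
  have x'0 : x - a * y != 0 by rewrite ex mulf_neq0.
  have Jx' : J (x - a * y).
    apply: IH.
    - by apply: (smB hs sI) => //; apply: JI.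
    - exact: x'0.
    - rewrite ex vM // vy kE; move: ha; clear; lia.
  have -> : x = (x - a * y) + a * y by rewrite subrK.
  by case: sJ => _ [mD mM]; apply: mD => //; apply: mM.
move=> x Ix; have [->|x0] := eqVneq x 0; first by case: sJ.
apply: (key N) => //; rewrite subnn.
by case: (Ip x Ix) => // e; move: x0; rewrite e eqxx.
Qed.

Lemma common_den (K : fieldType) (R : K -> Prop) : subring R -> is_quotient_field R ->
  forall s : seq K, exists b, R b /\ b != 0 /\ forall i, (i < size s)%N -> R (b * s`_i).
Proof.
move=> hs hq; elim=> [|x s [b [rb [b0 hb]]]].
  by exists 1; split; [exact: R1|split; [exact: oner_neq0|]].
have [p [q [rp [rq [q0 ->]]]]] := hq x.
exists (b * q); split; first exact: RM.
split; first by rewrite mulf_neq0.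
case=> [|i] /= hi.
  by rewrite -mulrA [q * _]mulrC mulfVK //; apply: RM.
by rewrite mulrAC; apply: RM => //; apply: hb.
Qed.

Lemma cond_ex (K : fieldType) (R : K -> Prop) (v : K -> int) : Hyp R v ->
  is_quotient_field R -> (exists s : seq K, forall x, intcl R x <-> rspan R s x) ->
  exists N : nat, forall x, Cc v N x -> R x.
Proof.
move=> H hq [s hs].
have hv := H_val H; have hsr := H_sub H.
have [b [rb [b0 hb]]] := common_den hsr hq s.
have vb0 : 0 <= v b by case: (R_ic H rb) => // e; move: b0; rewrite e eqxx.
have [N hN] := int_nat vb0.
exists N => x [->|hx]; first exact: R0.
have [->|x0] := eqVneq x 0; first exact: R0.
have : intcl R (x / b).
  apply/(H_ic H); right; rewrite vM // ?invr_neq0 // vV // hN.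
  by move: hx; clear; lia.
move/hs => [cc [hc e]].
have -> : x = b * (x / b) by rewrite mulrC mulfVK.
rewrite e mulr_sumr; apply: (Rsum hsr) => i _.
rewrite mulrCA; apply: RM => //; apply: hb; exact: ltn_ord.
Qed.
Lemma count_le_in (s : seq nat) (P Q : pred nat) :
  (forall k, k \in s -> P k -> Q k) -> (count P s <= count Q s)%N.
Proof.
elim: s => //= a s IH h.
have h1 : forall k, k \in s -> P k -> Q k by move=> k ks; apply: h; rewrite in_cons ks orbT.
have := IH h1; case: (boolP (P a)) => pa /=.
  by rewrite (h a (mem_head _ _) pa) /= ltnS.
by case: (Q a) => /=; rewrite ?add0n ?add1n // => /leqW.
Qed.

Lemma count_lt_in (s : seq nat) (P Q : pred nat) :
  (forall k, k \in s -> P k -> Q k) -> (exists k, k \in s /\ Q k /\ ~~ P k) ->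
  (count P s < count Q s)%N.
Proof.
elim: s => [_ [k []]|a s IH h [k [ks [qk pk]]]] //=.
have h1 : forall k, k \in s -> P k -> Q k by move=> j js; apply: h; rewrite in_cons js orbT.
move: ks; rewrite in_cons => /orP [/eqP ka|ks].
  subst; rewrite qk (negbTE pk) /= add0n add1n ltnS.
  exact: count_le_in.
have := IH h1 (ex_intro _ k (conj ks (conj qk pk))).
case: (boolP (P a)) => pa /=.
  by rewrite (h a (mem_head _ _) pa) /= ltnS.
by case: (Q a) => /=; rewrite ?add0n ?add1n // => /leqW.
Qed.

Lemma count_add1 (s : seq nat) (P Q : pred nat) (k0 : nat) : uniq s ->
  (forall k, k \in s -> Q k = P k || (k == k0)) -> k0 \in s -> ~~ P k0 ->
  count Q s = (count P s).+1.
Proof.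
elim: s => //= a s IH /andP [an us] h.
rewrite in_cons => /orP [/eqP ka|ks] pk.
  subst a; rewrite (h k0 (mem_head _ _)) eqxx orbT (negbTE pk) /= add1n add0n.
  congr S; apply: eq_in_count => j js; rewrite (h j); last by rewrite in_cons js orbT.
  case: eqP => [e|]; last by rewrite orbF.
  by subst; move: an; rewrite js.
have ak : a != k0 by apply/eqP => e; subst; move: an; rewrite ks.
rewrite (h a (mem_head _ _)) (negbTE ak) orbF IH //.
  by rewrite addnS.
by move=> j js; apply: h; rewrite in_cons js orbT.
Qed.

Lemma max_ex (P : nat -> Prop) (c : nat) : (exists k, (k < c)%N /\ P k) ->
  exists k, [/\ (k < c)%N, P k & forall j, (k < j)%N -> (j < c)%N -> ~ P j].
Proof.
elim: c => [[k [] ]|c IH [k [kc pk]]] //.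
case: (EM (P c)) => pc.
  exists c; split => // j cj jc; exfalso; move: cj jc; clear; lia.
have kc' : (k < c)%N.
  move: kc; rewrite ltnS leq_eqVlt => /orP [/eqP e|] //; by subst.
have [j [jc pj hj]] := IH (ex_intro _ k (conj kc' pk)).
exists j; split => //; first exact: ltnW.
move=> i ji ic; move: ic; rewrite ltnS leq_eqVlt => /orP [/eqP e|ic].
  by subst.
exact: hj.
Qed.
Definition good (K : fieldType) (R : K -> Prop) (v : K -> int) (c : nat) (M : K -> Prop) :=
  [/\ submod R M, (forall x, M x -> x = 0 \/ 0 <= v x) & (forall x, Cc v c x -> M x)].

Definition cnt (K : fieldType) (v : K -> int) (c : nat) (M : K -> Prop) : nat :=
  count (fun k => `[< valR M v k >]) (iota 0 c).

Lemma valR_mono (K : fieldType) (v : K -> int) (J I : K -> Prop) :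
  (forall x, J x -> I x) -> forall k, valR J v k -> valR I v k.
Proof. by move=> h k [x [jx rest]]; exists x; split => //; apply: h. Qed.

Lemma cnt_le (K : fieldType) (v : K -> int) (c : nat) (J I : K -> Prop) :
  (forall x, J x -> I x) -> (cnt v c J <= cnt v c I)%N.
Proof.
move=> h; apply: count_le_in => k _ /asboolP hk; apply/asboolP.
exact: valR_mono hk.
Qed.

Lemma cnt_ext (K : fieldType) (v : K -> int) (c : nat) (J I : K -> Prop) :
  (forall x, J x <-> I x) -> cnt v c J = cnt v c I.
Proof.
by move=> h; apply/eqP; rewrite eqn_leq !cnt_le // => x /h.
Qed.

Lemma vals_sub (K : fieldType) (R : K -> Prop) (v : K -> int) (c : nat) : Hyp R v ->
  forall J I, good R v c J -> good R v c I -> (forall x, J x -> I x) ->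
  (forall k, (k < c)%N -> valR I v k -> valR J v k) -> forall x, I x -> J x.
Proof.
move=> H J I [sJ _ CJ] [sI Ip _] JI hk.
exact: (approx H sI sJ JI Ip CJ hk).
Qed.

Lemma cnt_lt (K : fieldType) (R : K -> Prop) (v : K -> int) (c : nat) : Hyp R v ->
  forall J I, good R v c J -> good R v c I -> (forall x, J x -> I x) ->
  (exists x, I x /\ ~ J x) -> (cnt v c J < cnt v c I)%N.
Proof.
move=> H J I gJ gI JI [x [Ix nJx]].
have : exists k, (k < c)%N /\ valR I v k /\ ~ valR J v k.
  case: (EM (exists k, (k < c)%N /\ valR I v k /\ ~ valR J v k)) => // nex.
  exfalso; apply: nJx; apply: (vals_sub H gJ gI JI) => // k kc vI.
  case: (EM (valR J v k)) => // nJ; exfalso; apply: nex; exists k; split => //.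
case=> k [kc [vI nJ]].
apply: count_lt_in => [j _ /asboolP hj|]; first by apply/asboolP; exact: valR_mono hj.
exists k; split; first by rewrite mem_iota add0n kc.
split; first by apply/asboolP.
by apply/negP => /asboolP.
Qed.

Lemma chain_mono (K : fieldType) (R N M : K -> Prop) (n : nat) (f : nat -> K -> Prop) :
  strict_chain R N M n f -> forall i j, (i <= j <= n)%N -> forall x, f i x -> f j x.
Proof.
move=> [_ [_ [_ hs]]] i j /andP [ij jn].
elim: j ij jn => [|j IH] ij jn x fx.
  by move: ij; rewrite leqn0 => /eqP e; subst.
move: ij; rewrite leq_eqVlt => /orP [/eqP e|ij]; first by subst.
have jn' : (j < n)%N by exact: jn.
apply: (proj1 (hs j jn')); apply: IH => //; exact: ltnW.
Qed.

Lemma good_between (K : fieldType) (R : K -> Prop) (v : K -> int) (c : nat) (J I F : K -> Prop) :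
  good R v c J -> good R v c I -> submod R F ->
  (forall x, J x -> F x) -> (forall x, F x -> I x) -> good R v c F.
Proof.
move=> [_ _ CJ] [_ Ip _] sF JF FI; split => //.
- by move=> x /FI /Ip.
- by move=> x /CJ /JF.
Qed.
Lemma len_upper (K : fieldType) (R : K -> Prop) (v : K -> int) (c : nat) : Hyp R v ->
  forall J I, good R v c J -> good R v c I -> (forall x, J x -> I x) ->
  forall k f, strict_chain R J I k f -> (k <= cnt v c I - cnt v c J)%N.
Proof.
move=> H J I gJ gI JI k f hf.
have gf : forall i, (i <= k)%N -> good R v c (f i).
  move=> i ik; case: (hf) => h0 [hk [hsub _]].
  apply: (good_between gJ gI (hsub i ik)).
  - move=> x /h0 f0; apply: (chain_mono hf (i:=0)) => //; by rewrite leq0n ik.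
  - move=> x fi; apply/hk; apply: (chain_mono hf (i:=i)) => //; by rewrite ik leqnn.
have key : forall i, (i <= k)%N -> (cnt v c J + i <= cnt v c (f i))%N.
  elim=> [|i IH] ik.
    by rewrite addn0 (cnt_ext v c (I:=f 0) (J:=J)) // => x; split => /(proj1 hf).
  have ik' : (i < k)%N by exact: ik.
  have := IH (ltnW ik'); rewrite addnS => h.
  apply: leq_trans (_ : (cnt v c (f i)).+1 <= _)%N; first by rewrite ltnS.
  case: hf => _ [_ [_ hs]]; case: (hs i ik') => sub ex.
  apply: (cnt_lt H (gf i (ltnW ik')) (gf i.+1 ik') sub ex).
have := key k (leqnn k).
rewrite (cnt_ext v c (I:=I) (J:=f k)); last by move=> x; split => /(proj1 (proj2 hf)).
move=> h; move: h; clear; lia.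
Qed.

Lemma len_lower (K : fieldType) (R : K -> Prop) (v : K -> int) (c : nat) : Hyp R v ->
  forall I, good R v c I -> forall m J, good R v c J -> (forall x, J x -> I x) ->
  (cnt v c I - cnt v c J)%N = m -> exists f, strict_chain R J I m f.
Proof.
move=> H I gI; have hv := H_val H; have hs := H_sub H.
elim=> [|m IH] J gJ JI hm.
  have IJ : forall x, I x -> J x.
    move=> x Ix; case: (EM (J x)) => // nJ; exfalso.
    have := cnt_lt H gJ gI JI (ex_intro _ x (conj Ix nJ)).
    by move: hm; clear; lia.
  exists (fun _ => J); split; first by move=> x.
  split; first by move=> x; split => [/JI|/IJ].
  split; first by move=> i _; case: gJ.
  by [].
have : exists k, (k < c)%N /\ (valR I v k /\ ~ valR J v k).
  case: (EM (exists k, (k < c)%N /\ valR I v k /\ ~ valR J v k)) => // nex.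
  exfalso.
  have IJ : forall x, I x -> J x.
    apply: (vals_sub H gJ gI JI) => k kc vI.
    case: (EM (valR J v k)) => // nJ; exfalso; apply: nex; exists k; split => //.
  have : (cnt v c I <= cnt v c J)%N by apply: cnt_le.
  by move: hm; clear; lia.
move=> /(max_ex (P := fun k => valR I v k /\ ~ valR J v k)) [k [kc [vIk nJk] kmax]].
pose J' := fun x => exists y z, J y /\ I z /\ (z = 0 \/ k%:Z <= v z) /\ x = y + z.
case: (gJ) => [[J0 [JD JM]] Jp CJ]; case: (gI) => [[I0 [ID IM]] Ip CI].
have JJ' : forall x, J x -> J' x.
  by move=> x Jx; exists x, 0; split => //; split => //; split; [left|rewrite addr0].
have J'I : forall x, J' x -> I x.
  by move=> x [y [z [Jy [Iz [_ ->]]]]]; apply: ID => //; apply: JI.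
have sJ' : submod R J'.
  split; first exact: JJ'.
  split.
    move=> x1 x2 [y1 [z1 [Jy1 [Iz1 [hz1 ->]]]]] [y2 [z2 [Jy2 [Iz2 [hz2 ->]]]]].
    exists (y1 + y2), (z1 + z2); split; first exact: JD.
    split; first exact: ID.
    split; last by rewrite addrACA.
    have [->|s0] := eqVneq (z1 + z2) 0; first by left.
    right; case: hz1 => [e1|h1]; first by move: s0; rewrite e1 add0r; case: hz2 => [->|//]; rewrite eqxx.
    case: hz2 => [e2|h2]; first by rewrite e2 addr0.
    have [e1|z10] := eqVneq z1 0; first by move: s0; rewrite e1 add0r.
    have [e2|z20] := eqVneq z2 0; first by rewrite e2 addr0.
    exact: vD_ge.
  move=> a x ra [y [z [Jy [Iz [hz ->]]]]].
  exists (a * y), (a * z); split; first exact: JM.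
  split; first exact: IM.
  split; last by rewrite mulrDr.
  have [->|a0] := eqVneq a 0; first by left; rewrite mul0r.
  case: hz => [->|hz]; first by left; rewrite mulr0.
  have [->|z0] := eqVneq z 0; first by left; rewrite mulr0.
  right; rewrite vM //.
  case: (R_ic H ra) => [e|ha]; first by move: a0; rewrite e eqxx.
  by move: ha hz; clear; lia.
have gJ' : good R v c J' by apply: (good_between gJ gI sJ' JJ' J'I).
have vJ' : forall j, (j < c)%N -> valR J' v j <-> valR J v j \/ j = k.
  move=> j jc; split.
    move=> [x [[y [z [Jy [Iz [hz ex]]]]] [x0 vx]]].
    have [jk|jk] := leqP k j.
      move: jk; rewrite leq_eqVlt => /orP [/eqP e|kj]; first by right.
      left; case: (EM (valR J v j)) => // nJ; exfalso; apply: (kmax j kj jc); split => //.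
      by exists x; split => //; apply: J'I; exists y, z.
    left; exists y; split => //.
    case: hz => [ez|hz].
      by move: ex x0 vx; rewrite ez addr0 => <-.
    have [ez|z0] := eqVneq z 0; first by move: ex x0 vx; rewrite ez addr0 => <-.
    have ey : y = x + - z by rewrite ex addrK.
    have nz0 : - z != 0 by rewrite oppr_eq0.
    have lt : v x < v (- z) by rewrite vN // vx; move: hz jk; clear; lia.
    have [s0 vs] := vD_strict hv x0 nz0 lt.
    by rewrite ey; split => //; rewrite vs.
  case=> [vJ|->]; first exact: valR_mono vJ.
  case: vIk => z [Iz [z0 vz]]; exists z; split; last by [].
  by exists 0, z; split => //; split => //; split; [right; rewrite vz|rewrite add0r].
have cJ' : cnt v c J' = (cnt v c J).+1.
  apply: (count_add1 (k0 := k)); first exact: iota_uniq.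
  - move=> j; rewrite mem_iota add0n => /andP [_ jc].
    apply/idP/idP.
      by move/asboolP/(vJ' j jc) => [h|->]; [apply/orP; left; apply/asboolP|rewrite eqxx orbT].
    move=> /orP [/asboolP h|/eqP ->]; apply/asboolP; apply/(vJ' _ _) => //; by [left|right].
  - by rewrite mem_iota add0n kc.
  - by apply/negP => /asboolP.
have hm2 : (cnt v c I - cnt v c J')%N = m by rewrite cJ' subnS hm.
have [f hf] := IH J' gJ' J'I hm2.
exists (fun i => if i is i'.+1 then f i' else J).
case: hf => h0 [hm' [hsub hst]].
split; first by move=> x.
split; first exact: hm'.
split; first by case=> [|i] /= hi; [case: gJ|apply: hsub].
case=> [|i] hi /=.
  split; first by move=> x /JJ' /h0.
  case: vIk => z [Iz [z0 vz]]; exists z; split.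
    by apply/h0; exists 0, z; split => //; split => //; split; [right; rewrite vz|rewrite add0r].
  move=> Jz; apply: nJk; by exists z.
exact: hst.
Qed.

Lemma len_count (K : fieldType) (R : K -> Prop) (v : K -> int) (c : nat) : Hyp R v ->
  forall J I, good R v c J -> good R v c I -> (forall x, J x -> I x) ->
  length_eq R J I (cnt v c I - cnt v c J).
Proof.
move=> H J I gJ gI JI; split.
  exact: (len_lower H gI (m := (cnt v c I - cnt v c J)%N) gJ JI (erefl _)).
by move=> k f; apply: (len_upper H gJ gI JI).
Qed.

Lemma len_uniq (K : fieldType) (R N M : K -> Prop) (a b : nat) :
  length_eq R N M a -> length_eq R N M b -> a = b.
Proof.
move=> [[f hf] ha] [[g hg] hb]; apply/eqP; rewrite eqn_leq.
by rewrite (hb _ _ hf) (ha _ _ hg).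
Qed.
Definition sig (S : nat -> Prop) (x : nat) : nat := count (fun k => `[< S k >]) (iota 0 x).

Lemma sigS (S : nat -> Prop) x : sig S x.+1 = (sig S x + `[< S x >])%N.
Proof. by rewrite /sig -addn1 iotaD count_cat /= addn0 add0n. Qed.

Lemma sig_mono (S : nat -> Prop) x y : (x <= y)%N -> (sig S x <= sig S y)%N.
Proof.
move=> /subnK <-; elim: (y - x)%N => [|k IH] //; rewrite addSn sigS.
exact: leq_trans IH (leq_addr _ _).
Qed.

Lemma sig_lt (S : nat -> Prop) x y : S x -> (x < y)%N -> (sig S x < sig S y)%N.
Proof.
move=> sx xy; apply: leq_trans (sig_mono S xy).
by rewrite sigS; case: asboolP => // _; rewrite addn1.
Qed.

Lemma sig_inj (S : nat -> Prop) x y : S x -> S y -> sig S x = sig S y -> x = y.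
Proof.
move=> sx sy e; case: (ltngtP x y) => // h.
- by have := sig_lt sx h; rewrite e ltnn.
- by have := sig_lt sy h; rewrite e ltnn.
Qed.

Lemma sig_ex (S : nat -> Prop) (c : nat) : (forall k, (c <= k)%N -> S k) ->
  forall i, exists x, S x /\ sig S x = i.
Proof.
move=> hc i.
have hj : forall j, (j <= sig S (c + j))%N.
  elim=> [|j IH] //; rewrite addnS sigS; case: asboolP => [_|]; last first.
    by move=> h; exfalso; apply: h; apply: hc; rewrite leq_addr.
  by rewrite addn1 ltnS.
have hex : exists x, (i < sig S x.+1)%N by exists (c + i)%N; rewrite -addnS; apply: hj.
case: (ex_minnP hex) => x px xmin.
have sx : (sig S x <= i)%N.
  case: x px xmin => [|x] px xmin; first by [].
  by rewrite leqNgt; apply/negP => /xmin; rewrite ltnn.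
move: px; rewrite sigS; case: asboolP => [Sx|nS]; last by rewrite addn0 ltnNge sx.
by rewrite addn1 ltnS => h; exists x; split => //; apply/eqP; rewrite eqn_leq sx h.
Qed.

Lemma sval_iff (S : nat -> Prop) i x : is_sval S i x <-> S x /\ sig S x = i.
Proof.
split.
  move=> [sx [l [ul [sl hl]]]]; split => //; rewrite -sl /sig -size_filter.
  apply/esym/perm_size; apply: uniq_perm => //; first by apply: filter_uniq; exact: iota_uniq.
  move=> k; rewrite mem_filter mem_iota add0n /=.
  apply/idP/idP => [/hl [sk kx]|/andP [/asboolP sk kx]].
    by apply/andP; split => //; apply/asboolP.
  by apply/hl.
move=> [sx e]; split => //.
exists [seq k <- iota 0 x | `[< S k >]]; split; first by apply: filter_uniq; exact: iota_uniq.
split; first by rewrite size_filter.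
move=> k; rewrite mem_filter mem_iota add0n /=; split.
  by move=> /andP [/asboolP sk kx].
by move=> [sk kx]; apply/andP; split => //; apply/asboolP.
Qed.
Record Ctx (K : fieldType) (R : K -> Prop) (v : K -> int) (c e : nat) : Prop := mkCtx {
  C_H : Hyp R v;
  C_cond : is_conductor (valR R v) c;
  C_CR : forall x, Cc v c x -> R x;
  C_c1 : (1 <= c)%N;
  C_mult : is_multiplicity (valR R v) e }.

Definition Rb (K : fieldType) (v : K -> int) : K -> Prop := fun x => x = 0 \/ 0 <= v x.


Lemma S0 (K : fieldType) (R : K -> Prop) (v : K -> int) : Hyp R v -> valR R v 0.
Proof.
move=> H; exists 1; split; first exact: R1 (H_sub H).
by split; [exact: oner_neq0|rewrite v1 //; exact: H_val H].
Qed.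

Lemma Sadd (K : fieldType) (R : K -> Prop) (v : K -> int) : Hyp R v ->
  forall a b, valR R v a -> valR R v b -> valR R v (a + b).
Proof.
move=> H a b [x [rx [x0 vx]]] [y [ry [y0 vy]]]; exists (x * y); split; first exact: RM (H_sub H) _ _ rx ry.
split; first by rewrite mulf_neq0.
by rewrite (vM (H_val H)) // vx vy.
Qed.

Lemma Smul (K : fieldType) (R : K -> Prop) (v : K -> int) (e : nat) : Hyp R v ->
  valR R v e -> forall q, valR R v (q * e).
Proof.
move=> H se; elim=> [|q IH]; first by rewrite mul0n; exact: S0.
by rewrite mulSn; apply: Sadd.
Qed.

Lemma Sge (K : fieldType) (R : K -> Prop) (v : K -> int) (c : nat) :
  is_conductor (valR R v) c -> forall k, (c <= k)%N -> valR R v k.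
Proof. by move=> [_ [h _]] k /subnK <-; rewrite addnC. Qed.

Lemma Snc1 (K : fieldType) (R : K -> Prop) (v : K -> int) (c : nat) :
  is_conductor (valR R v) c -> (1 <= c)%N -> ~ valR R v c.-1.
Proof.
move=> [sc [hk hmin]] c1 sc1.
have : (c <= c.-1)%N.
  apply: hmin => // [[|k]]; first by rewrite addn0.
  have -> : (c.-1 + k.+1 = c + k)%N by clear -c1; lia.
  exact: hk.
by move=> h; clear -h c1; lia.
Qed.

Lemma e_le_c (K : fieldType) (R : K -> Prop) (v : K -> int) (c e : nat) :
  is_conductor (valR R v) c -> is_multiplicity (valR R v) e -> (1 <= c)%N -> (e <= c)%N.
Proof. by move=> [sc _] [_ [_ h]] c1; apply: h. Qed.

Lemma Sbig (K : fieldType) (R : K -> Prop) (v : K -> int) (e : nat) :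
  is_multiplicity (valR R v) e -> forall k, valR R v k -> (0 < k)%N -> (e <= k)%N.
Proof. by move=> [_ [_ h]]. Qed.

Lemma colon_sub (K : fieldType) (R I : K -> Prop) : subring R -> submod R (colon R I).
Proof.
move=> hs; split; first by move=> a _; rewrite mul0r; exact: R0.
split.
  by move=> x y hx hy a ia; rewrite mulrDl; apply: RD => //; [apply: hx|apply: hy].
by move=> b x rb hx a ia; rewrite -mulrA; apply: RM => //; apply: hx.
Qed.

Lemma colon_R (K : fieldType) (R I : K -> Prop) : subring R ->
  (forall a, I a -> R a) -> forall y, R y -> colon R I y.
Proof. by move=> hs h y ry a ia; apply: RM => //; apply: h. Qed.

Lemma Rb_sub (K : fieldType) (R : K -> Prop) (v : K -> int) : Hyp R v -> submod R (Rb v).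
Proof.
move=> H; have hv := H_val H; split; first by left.
split.
  move=> x y [->|hx]; first by rewrite add0r.
  move=> [->|hy]; first by rewrite addr0; right.
  have [->|s0] := eqVneq (x + y) 0; first by left.
  have [x0|x0] := eqVneq x 0; first by rewrite x0 add0r; right.
  have [y0|y0] := eqVneq y 0; first by rewrite y0 addr0; right.
  by right; apply: vD_ge.
move=> a x ra [->|hx]; first by rewrite mulr0; left.
have [->|a0] := eqVneq a 0; first by rewrite mul0r; left.
have [->|x0] := eqVneq x 0; first by rewrite mulr0; left.
right; rewrite vM //; case: (R_ic H ra) => [e|ha]; first by move: a0; rewrite e eqxx.
by move: ha hx; clear; lia.
Qed.

Lemma colon_Rb (K : fieldType) (R : K -> Prop) (v : K -> int) (c e : nat) : Ctx R v c e ->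
  forall I, (forall x, Cc v c x -> I x) -> forall y, colon R I y -> Rb v y.
Proof.
move=> X I CI y hy; have H := C_H X; have hv := H_val H.
have [->|y0] := eqVneq y 0; first by left.
right; case: (lerP 0 (v y)) => // neg; exfalso.
have [m hm] : exists m : nat, v y = - (m.+1)%:Z.
  by case: (v y) neg => [n|n] //; exists n.
have hz : forall j : nat, exists z, z != 0 /\ v z = (c + j)%:Z.
  by move=> j; apply: v_exists.
have sj : forall j : nat, valR R v (c + j - m.+1).
  move=> j; have [z [z0 vz]] := hz j.
  have ryz : R (y * z) by apply: hy; apply: CI; right; rewrite vz; clear; lia.
  have yz0 : y * z != 0 by rewrite mulf_neq0.
  have vyz : v (y * z) = (c + j)%:Z - (m.+1)%:Z by rewrite vM // hm vz; clear; lia.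
  case: (R_ic H ryz) => [e'|pos]; first by move: yz0; rewrite e' eqxx.
  exists (y * z); split => //; split => //; rewrite vyz.
  move: pos; rewrite vyz; clear; lia.
have mc : (m.+1 <= c)%N.
  have [z [z0 vz]] := hz 0%N.
  have ryz : R (y * z) by apply: hy; apply: CI; right; rewrite vz; clear; lia.
  have yz0 : y * z != 0 by rewrite mulf_neq0.
  case: (R_ic H ryz) => [e'|pos]; first by move: yz0; rewrite e' eqxx.
  move: pos; rewrite vM // hm vz; clear; lia.
have [_ [_ hmin]] := C_cond X.
have e0 : forall j, (c - m.+1 + j = c + j - m.+1)%N by move=> j; clear -mc; lia.
have s0 : valR R v (c - m.+1)%N by have := sj 0%N; rewrite addn0.
have sk : forall k, valR R v (c - m.+1 + k)%N by move=> k; rewrite e0.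
by have := hmin _ s0 sk; clear -mc; lia.
Qed.

Lemma colon_good (K : fieldType) (R : K -> Prop) (v : K -> int) (c e : nat) : Ctx R v c e ->
  forall I, (forall x, Cc v c x -> I x) -> (forall x, I x -> R x) -> good R v c (colon R I).
Proof.
move=> X I CI IR; have H := C_H X; split.
- exact: colon_sub (H_sub H).
- by move=> x hx; exact: (colon_Rb X CI hx).
- by move=> x /(C_CR X) rx; apply: colon_R (H_sub H) IR _ rx.
Qed.

Lemma R_good (K : fieldType) (R : K -> Prop) (v : K -> int) (c e : nat) : Ctx R v c e ->
  good R v c R.
Proof.
move=> X; have H := C_H X; have hs := H_sub H; split.
- split; first exact: R0.
  by split; [exact: RD|move=> a x ra rx; exact: RM].
- exact: R_ic H.
- exact: C_CR X.
Qed.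

Lemma Rb_good (K : fieldType) (R : K -> Prop) (v : K -> int) (c e : nat) : Ctx R v c e ->
  good R v c (Rb v).
Proof.
move=> X; have H := C_H X; split.
- exact: Rb_sub H.
- by [].
- by move=> x [->|h]; [left|right; move: h; clear; lia].
Qed.

Lemma cnt_Rb (K : fieldType) (R : K -> Prop) (v : K -> int) (c e : nat) : Ctx R v c e ->
  cnt v c (Rb v) = c.
Proof.
move=> X; rewrite /cnt (eq_in_count (a2 := predT)); first by rewrite count_predT size_iota.
move=> k _; apply/asboolP; have [y [y0 vy]] := v_exists (H_val (C_H X)) k%:Z.
by exists y; split => //; right; rewrite vy.
Qed.
Lemma chain_map (K : fieldType) (R : K -> Prop) (v : K -> int) (c e : nat) : Ctx R v c e ->
  forall J I B (x : K), good R v c J -> good R v c I -> good R v c B ->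
  (forall y, J y -> I y) -> (forall y, R y -> B y) ->
  (forall y, I y -> B (y * x)) -> (forall y, J y -> R (y * x)) ->
  (forall y, I y -> R (y * x) -> J y) ->
  (cnt v c I - cnt v c J <= cnt v c B - cnt v c R)%N.
Proof.
move=> X J I B x gJ gI gB JI RB IB JR IRJ.
have H := C_H X; have hs := H_sub H.
set m := (cnt v c I - cnt v c J)%N.
have [[f hf] _] := len_count H gJ gI JI.
case: (hf) => f0 [fm [fsub fst]].
have fI : forall j, (j <= m)%N -> forall y, f j y -> I y.
  move=> j jm y fy; apply/fm; apply: (chain_mono hf (i:=j)) => //; by rewrite jm leqnn.
have Jf : forall j, (j <= m)%N -> forall y, J y -> f j y.
  move=> j jm y /f0 fy; apply: (chain_mono hf (i:=0)) => //.
pose g := fun j w => exists y a, f j y /\ R a /\ w = y * x + a.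
have gsub : forall j, (j <= m)%N -> submod R (g j).
  move=> j jm; case: (fsub j jm) => [F0 [FD FM]]; split.
    by exists 0, 0; split => //; split; [exact: R0|rewrite mul0r addr0].
  split.
    move=> w1 w2 [y1 [a1 [f1 [r1 ->]]]] [y2 [a2 [f2 [r2 ->]]]].
    exists (y1 + y2), (a1 + a2); split; first exact: FD.
    by split; [exact: RD|rewrite mulrDl addrACA].
  move=> b w rb [y [a [fy [ra ->]]]]; exists (b * y), (b * a); split; first exact: FM.
  by split; [exact: RM|rewrite mulrDr mulrA].
have hg : strict_chain R R (g m) m g.
  split.
    move=> w; split.
      move=> [y [a [fy [ra ->]]]]; apply: RD => //; apply: JR; exact/f0.
    by move=> rw; exists 0, w; split; [apply/f0; case: gJ => [[]]|split => //; rewrite mul0r add0r].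
  split; first by move=> w.
  split; first exact: gsub.
  move=> j jm; case: (fst j jm) => sub [y [fy nfy]]; split.
    by move=> w [y' [a [fy' [ra ->]]]]; exists y', a; split => //; apply: sub.
  exists (y * x); split; first by exists y, 0; split => //; split; [exact: R0|rewrite addr0].
  move=> [y' [a [fy' [ra ee]]]]; apply: nfy.
  have Iy : I y by apply: (fI j.+1) => //.
  have Iy' : I y' by apply: (fI j) => //; exact: ltnW.
  case: (fsub j (ltnW jm)) => [F0 [FD FM]].
  have hJ : J (y - y').
    apply: IRJ.
      by case: gI => [[_ [ID IM]] _ _]; rewrite -mulN1r; apply: ID => //; apply: IM => //; apply: RN hs _ (R1 hs).
    by have -> : (y - y') * x = a by rewrite mulrBl ee addrAC subrr add0r.
  have -> : y = (y - y') + y' by rewrite subrK.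
  by apply: FD => //; apply: (Jf j) => //; exact: ltnW.
have ggood : good R v c (g m).
  apply: (good_between (R_good X) gB (gsub m (leqnn m))).
    by move=> w rw; exists 0, w; split; [apply: (Jf m) => //; case: gJ => [[]]|split => //; rewrite mul0r add0r].
  move=> w [y [a [fy [ra ->]]]]; case: gB => [[_ [BD _]] _ _].
  apply: BD; [apply: IB; exact: (fI m)|exact: RB].
have Rg : forall w, R w -> g m w.
  by move=> w rw; exists 0, w; split; [apply: (Jf m) => //; case: gJ => [[]]|split => //; rewrite mul0r add0r].
have := len_upper H (R_good X) ggood Rg hg.
move=> h; apply: leq_trans h _; apply: leq_sub2r; apply: cnt_le.
move=> w [y [a [fy [ra ->]]]]; case: gB => [[_ [BD _]] _ _].
apply: BD; [apply: IB; exact: (fI m)|exact: RB].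
Qed.
Lemma xs_ex (K : fieldType) (R : K -> Prop) (v : K -> int) (c e : nat) : Ctx R v c e ->
  forall i, exists x, valR R v x /\ sig (valR R v) x = i.
Proof. by move=> X; apply: (sig_ex (c := c)); apply: Sge (C_cond X). Qed.

Lemma Rsub_iff (K : fieldType) (R : K -> Prop) (v : K -> int) (c e : nat) : Ctx R v c e ->
  forall i x, valR R v x -> sig (valR R v) x = i ->
  forall a, Rsub R v i a <-> R a /\ (a = 0 \/ x%:Z <= v a).
Proof.
move=> X i x sx hx a; split.
  case=> ra h; split => //; case: h => [->|[x' [hsv le]]]; first by left.
  have [sx' hx'] := proj1 (sval_iff _ _ _) hsv.
  by right; rewrite (sig_inj sx sx' (etrans hx (esym hx'))).
move=> [ra h]; split => //; case: h => [->|h]; first by left.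
by right; exists x; split => //; apply/sval_iff.
Qed.

Lemma x_le_c (K : fieldType) (R : K -> Prop) (v : K -> int) (c e : nat) : Ctx R v c e ->
  forall x, (sig (valR R v) x <= sig (valR R v) c)%N -> (x <= c)%N.
Proof.
move=> X x h; rewrite leqNgt; apply/negP => cx.
have := sig_lt (Sge (C_cond X) (leqnn c)) cx; by rewrite ltnNge h.
Qed.

Lemma next_elem (S : nat -> Prop) x y z : S x -> S y -> S z ->
  sig S y = (sig S x).+1 -> (x < z)%N -> (y <= z)%N.
Proof.
move=> sx sy sz hy xz; rewrite leqNgt; apply/negP => zy.
have h1 := sig_lt sz zy; have h2 := sig_lt sx xz.
by move: h1 h2; rewrite hy; clear; lia.
Qed.

Lemma Rsub_R (K : fieldType) (R : K -> Prop) (v : K -> int) i a : Rsub R v i a -> R a.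
Proof. by case. Qed.

Lemma C_Rsub (K : fieldType) (R : K -> Prop) (v : K -> int) (c e : nat) : Ctx R v c e ->
  forall i, (i <= sig (valR R v) c)%N -> forall a, Cc v c a -> Rsub R v i a.
Proof.
move=> X i ic a ca; have [x [sx hx]] := xs_ex X i.
apply/(Rsub_iff X sx hx); split; first exact: (C_CR X ca).
case: ca => [->|h]; first by left.
right; have xc : (x <= c)%N by apply: (x_le_c X); rewrite hx.
by move: h xc; clear; lia.
Qed.

Lemma A_good (K : fieldType) (R : K -> Prop) (v : K -> int) (c e : nat) : Ctx R v c e ->
  forall i, (i <= sig (valR R v) c)%N -> good R v c (colon R (Rsub R v i)).
Proof.
move=> X i ic; apply: (colon_good X); first exact: C_Rsub X _ ic.
exact: Rsub_R.
Qed.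

Lemma A_mono (K : fieldType) (R : K -> Prop) (v : K -> int) (c e : nat) : Ctx R v c e ->
  forall i, (0 < i)%N -> forall y, colon R (Rsub R v i.-1) y -> colon R (Rsub R v i) y.
Proof.
move=> X i i0 y hy a ra; apply: hy.
have [x [sx hx]] := xs_ex X i; have [x' [sx' hx']] := xs_ex X i.-1.
move/(Rsub_iff X sx hx): ra => [ra h]; apply/(Rsub_iff X sx' hx'); split => //.
case: h => [->|h]; first by left.
right; have : (x' < x)%N.
  rewrite ltnNge; apply/negP => le.
  have := sig_mono (valR R v) le; rewrite hx hx'; case: i i0 {hx hx'} => // i _ /=; by rewrite ltnn.
by move: h; clear; lia.
Qed.

Lemma cnt_A0 (K : fieldType) (R : K -> Prop) (v : K -> int) (c e : nat) : Ctx R v c e ->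
  cnt v c (colon R (Rsub R v 0)) = sig (valR R v) c.
Proof.
move=> X; have H := C_H X; have hs := H_sub H.
have s0 : sig (valR R v) 0 = 0%N by [].
rewrite (cnt_ext v c (I := R)) //.
move=> y; split.
  move=> hy; rewrite -[y]mulr1; apply: hy; apply/(Rsub_iff X (S0 H) s0).
  by split; [exact: R1|right; rewrite v1 //; exact: H_val H].
apply: colon_R => //; exact: Rsub_R.
Qed.

Lemma cnt_An (K : fieldType) (R : K -> Prop) (v : K -> int) (c e : nat) : Ctx R v c e ->
  cnt v c (colon R (Rsub R v (sig (valR R v) c))) = c.
Proof.
move=> X; have H := C_H X; have hs := H_sub H; have hv := H_val H.
rewrite /cnt (eq_in_count (a2 := predT)); first by rewrite count_predT size_iota.
move=> k _; apply/asboolP; have [y [y0 vy]] := v_exists hv k%:Z.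
exists y; split => //.
move=> a /(Rsub_iff X (Sge (C_cond X) (leqnn c)) (erefl _)) [ra [->|h]].
  by rewrite mulr0; exact: R0.
apply: (C_CR X); have [->|a0] := eqVneq a 0; first by left; rewrite mulr0.
right; rewrite vM // vy; by move: h; clear; lia.
Qed.
Lemma val_nat (K : fieldType) (R : K -> Prop) (v : K -> int) : Hyp R v ->
  forall a, R a -> a != 0 -> exists k : nat, v a = k%:Z /\ valR R v k.
Proof.
move=> H a ra a0; case: (R_ic H ra) => [e|h]; first by move: a0; rewrite e eqxx.
have [k hk] := int_nat h; exists k; split => //; by exists a.
Qed.

Lemma Am_good (K : fieldType) (R : K -> Prop) (v : K -> int) (c e : nat) : Ctx R v c e ->
  good R v c (colon R (maxideal R)).
Proof.
move=> X; have H := C_H X; apply: (colon_good X).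
  move=> x cx; apply: (m_of_val H); first exact: (C_CR X cx).
  case: cx => [->|h]; first by left.
  by right; have := C_c1 X; move: h; clear; lia.
by move=> x [].
Qed.

Lemma xs_lt (S : nat -> Prop) x y : S x -> S y -> (sig S x < sig S y)%N -> (x < y)%N.
Proof.
move=> sx sy h; rewrite ltnNge; apply/negP => le.
by have := sig_mono S le; rewrite leqNgt h.
Qed.

Lemma rho_le (K : fieldType) (R : K -> Prop) (v : K -> int) (c e : nat) : Ctx R v c e ->
  forall i, (0 < i <= sig (valR R v) c)%N ->
  (cnt v c (colon R (Rsub R v i)) - cnt v c (colon R (Rsub R v i.-1)) <=
   cnt v c (colon R (maxideal R)) - cnt v c R)%N.
Proof.
move=> X i /andP [i0 ic]; have H := C_H X; have hs := H_sub H; have hv := H_val H.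
have [x' [sx' hx']] := xs_ex X i.-1; have [xi [sxi hxi]] := xs_ex X i.
have hsig : sig (valR R v) xi = (sig (valR R v) x').+1 by rewrite hx' hxi prednK.
have [xx [rxx [xx0 vxx]]] := sx'.
have ic' : (i.-1 <= sig (valR R v) c)%N by apply: leq_trans (leq_pred _) ic.
apply: (chain_map X (A_good X ic') (A_good X ic) (Am_good X) (A_mono X i0)
  (colon_R hs (fun a (h : maxideal R a) => proj1 h)) (x := xx)).
- move=> y hy a ma; rewrite -mulrA; apply: hy.
  apply/(Rsub_iff X sxi hxi); split; first by apply: RM => //; case: ma.
  have [->|a0] := eqVneq a 0; first by left; rewrite mulr0.
  right; have [k [vk sk]] := val_nat H (proj1 ma) a0.
  have va1 := m_val H ma a0.
  rewrite vM // vxx vk.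
  have : (xi <= x' + k)%N.
    apply: (next_elem sx' sxi (Sadd H sx' sk) hsig).
    by move: va1; rewrite vk; clear; lia.
  by clear; lia.
- by move=> y hy; apply: hy; apply/(Rsub_iff X sx' hx'); split => //; right; rewrite vxx.
- move=> y hy ryx z hz; move/(Rsub_iff X sx' hx'): hz => [rz [->|hz]].
    by rewrite mulr0; exact: R0.
  have [z0|z0] := eqVneq z 0; first by rewrite z0 mulr0; exact: R0.
  have iw : intcl R (z / xx).
    apply/(H_ic H); right; rewrite vM // ?invr_neq0 // vV // vxx.
    by move: hz; clear; lia.
  have [a [ra ha]] := H_res H iw.
  have [e0|wa0] := eqVneq (z / xx - a) 0.
    have -> : z = a * xx by move/eqP: e0; rewrite subr_eq0 => /eqP <-; rewrite mulfVK.
    by rewrite mulrCA; apply: RM.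
  have {}ha : 1 <= v (z / xx - a) by case: ha => // e1; move: wa0; rewrite e1 eqxx.
  have ez : z - a * xx = xx * (z / xx - a) by rewrite mulrBr mulrCA mulfV // mulr1 mulrC.
  have d0 : z - a * xx != 0 by rewrite ez mulf_neq0.
  have rd : R (z - a * xx) by apply: RB => //; apply: RM.
  have Rsd : Rsub R v i (z - a * xx).
    apply/(Rsub_iff X sxi hxi); split => //; right.
    have [k [vk sk]] := val_nat H rd d0.
    have : (xi <= k)%N.
      apply: (next_elem sx' sxi sk hsig).
      by move: vk ha; rewrite ez vM // vxx; clear; lia.
    by rewrite vk; clear; lia.
  have -> : y * z = y * (z - a * xx) + a * (y * xx).
    by rewrite mulrBr mulrCA subrK.
  by apply: (RD hs); [apply: hy|apply: (RM hs)].
Qed.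

Lemma rho_ge1 (K : fieldType) (R : K -> Prop) (v : K -> int) (c e : nat) : Ctx R v c e ->
  forall i, (0 < i <= sig (valR R v) c)%N ->
  (cnt v c (colon R (Rsub R v i.-1)) < cnt v c (colon R (Rsub R v i)))%N.
Proof.
move=> X i /andP [i0 ic]; have H := C_H X; have hs := H_sub H; have hv := H_val H.
have [x' [sx' hx']] := xs_ex X i.-1; have [xi [sxi hxi]] := xs_ex X i.
have ic' : (i.-1 <= sig (valR R v) c)%N by apply: leq_trans (leq_pred _) ic.
have sc := Sge (C_cond X) (leqnn c).
have x'c : (x' < c)%N by apply: (xs_lt sx' sc); rewrite hx'; case: i i0 ic {hx' hxi ic'}.
have x'xi : (x' < xi)%N by apply: (xs_lt sx' sxi); rewrite hx' hxi; case: i i0 {hx' hxi ic ic'}.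
apply: (cnt_lt H (A_good X ic') (A_good X ic) (A_mono X i0)).
have [y [y0 vy]] := v_exists hv (c.-1 - x')%:Z.
exists y; split.
  move=> a /(Rsub_iff X sxi hxi) [ra [->|ha]]; first by rewrite mulr0; exact: R0.
  apply: (C_CR X); have [->|a0] := eqVneq a 0; first by left; rewrite mulr0.
  right; rewrite vM // vy; move: ha x'xi x'c; clear; lia.
have [xx [rxx [xx0 vxx]]] := sx'.
move=> hy; have : R (y * xx) by apply: hy; apply/(Rsub_iff X sx' hx'); split => //; right; rewrite vxx.
move=> ryx; apply: (Snc1 (C_cond X) (C_c1 X)); exists (y * xx); split => //.
split; first by rewrite mulf_neq0.
rewrite vM // vy vxx; move: x'c; clear; lia.
Qed.
Lemma count_diff (s : seq nat) (P Q : pred nat) :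
  (forall k, k \in s -> P k -> Q k) ->
  count Q s = (count P s + count (fun k => Q k && ~~ P k) s)%N.
Proof.
elim: s => //= a s IH h.
rewrite IH; last by move=> k ks; apply: h; rewrite in_cons ks orbT.
case: (boolP (P a)) => pa; first by rewrite (h a (mem_head _ _) pa) /=; clear; lia.
by case: (Q a) => /=; clear; lia.
Qed.

Lemma count_int_gen (a b c : nat) :
  count (fun k => (a <= k) && (k < b))%N (iota 0 c) = (minn b c - minn a c)%N.
Proof.
elim: c => [|c IH]; first by rewrite !minn0.
rewrite -addn1 iotaD count_cat /= add0n addn0 IH.
case: (leqP a c) => h1; case: (ltnP c b) => h2 /=; clear -h1 h2; lia.
Qed.

Lemma count_int (a b c : nat) : (a <= b <= c)%N ->
  count (fun k => (a <= k) && (k < b))%N (iota 0 c) = (b - a)%N.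
Proof.
move=> /andP [ab bc]; rewrite count_int_gen; clear -ab bc; lia.
Qed.
Lemma tele_le (F : nat -> nat) (n r : nat) :
  (forall i, (0 < i <= n)%N -> (F i <= F i.-1 + r)%N) ->
  forall j, (j <= n)%N -> (F j <= F 0 + j * r)%N.
Proof.
move=> h; elim=> [|j IH] jn; first by rewrite mul0n addn0.
have := h j.+1 (andb_true_intro (conj (ltn0Sn _) jn)); rewrite /= mulSn.
by have := IH (ltnW jn); clear; lia.
Qed.

Lemma tele_ge (F : nat -> nat) (n r : nat) :
  (forall i, (0 < i <= n)%N -> (F i <= F i.-1 + r)%N) ->
  forall k, (k <= n)%N -> (F n <= F (n - k) + k * r)%N.
Proof.
move=> h; elim=> [|k IH] kn; first by rewrite subn0 mul0n addn0.
have := IH (ltnW kn).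
have hi : (0 < n - k <= n)%N by apply/andP; split; [rewrite subn_gt0|rewrite leq_subr].
have := h _ hi.
have -> : (n - k).-1 = (n - k.+1)%N by clear -kn; lia.
rewrite mulSn; clear; lia.
Qed.

Lemma tele (F : nat -> nat) (n r : nat) :
  (forall i, (0 < i <= n)%N -> (F i <= F i.-1 + r)%N) ->
  (F n = F 0 + n * r)%N <-> (forall i, (0 < i <= n)%N -> F i = (F i.-1 + r)%N).
Proof.
move=> h; split.
  move=> eq i /andP [i0 iN].
  have a := tele_le h (leq_trans (leq_pred i) iN).
  have b := tele_ge h (leq_subr i n).
  rewrite subKn // in b.
  have hi := h i (andb_true_intro (conj i0 iN)).
  have ee : (i * r = i.-1 * r + r)%N by rewrite -{1}(prednK i0) mulSn addnC.
  have ee2 : (n * r = i * r + (n - i) * r)%N by rewrite -mulnDl subnKC.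
  move: a b hi eq ee ee2; clear; lia.
move=> hh.
have : forall j, (j <= n)%N -> F j = (F 0 + j * r)%N.
  elim=> [|j IH] jn; first by rewrite mul0n addn0.
  have -> : F j.+1 = (F j + r)%N by apply: (hh j.+1); rewrite ltn0Sn jn.
  by rewrite IH ?(ltnW jn) // mulSn; clear; lia.
by move=> /(_ n (leqnn n)).
Qed.
Lemma C_in_R (K : fieldType) (R : K -> Prop) (v : K -> int) (c : nat) : Hyp R v ->
  is_conductor (valR R v) c -> forall N0 : nat, (forall x, Cc v N0 x -> R x) ->
  forall x, Cc v c x -> R x.
Proof.
move=> H hc N0 hN0; have hv := H_val H; have hs := H_sub H.
pose J := fun x => R x /\ Cc v c x.
have sI : submod R (Cc v c).
  split; first by left.
  split.
    move=> x y [->|hx]; first by rewrite add0r.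
    move=> [->|hy]; first by rewrite addr0; right.
    have [->|s0] := eqVneq (x + y) 0; first by left.
    have [x0|x0] := eqVneq x 0; first by rewrite x0 add0r; right.
    have [y0|y0] := eqVneq y 0; first by rewrite y0 addr0; right.
    by right; apply: vD_ge.
  move=> a x ra [->|hx]; first by rewrite mulr0; left.
  have [->|a0] := eqVneq a 0; first by rewrite mul0r; left.
  have [->|x0] := eqVneq x 0; first by rewrite mulr0; left.
  right; rewrite vM //; case: (R_ic H ra) => [e|ha]; first by move: a0; rewrite e eqxx.
  by move: ha hx; clear; lia.
have sJ : submod R J.
  case: sI => [I0 [ID IM]]; split; first by split; [exact: R0|].
  split; first by move=> x y [rx cx] [ry cy]; split; [exact: RD|exact: ID].
  by move=> a x ra [rx cx]; split; [exact: RM|exact: IM].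
move=> x cx; suff : J x by case.
apply: (approx H (N := maxn N0 c) sI sJ) => //.
- by move=> y [].
- move=> y [->|h]; first by left.
  by right; move: h; clear; lia.
- move=> y [->|h]; first by split; [exact: R0|left].
  split; first by apply: hN0; right; move: h; clear; lia.
  by right; move: h; clear; lia.
- move=> k _ [y [[->|cy] [y0 vy]]]; first by move: y0; rewrite eqxx.
  have ck : (c <= k)%N by move: cy; rewrite vy; clear; lia.
  have [z [rz [z0 vz]]] := Sge hc ck.
  by exists z; split => //; split => //; right; rewrite vz; move: ck; clear; lia.
Qed.

Lemma c_pos (K : fieldType) (R : K -> Prop) (v : K -> int) (c : nat) : Hyp R v ->
  (forall x, Cc v c x -> R x) -> ~ regular R -> (1 <= c)%N.
Proof.
move=> H CR nreg; case: c CR => // CR; exfalso; apply: nreg.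
have hv := H_val H; have hs := H_sub H.
have [t [t0 vt]] := v_exists hv 1.
exists t => x; split.
  move=> mx; have [->|x0] := eqVneq x 0; first by exists 0; split; [exact: R0|rewrite mul0r].
  have vx := m_val H mx x0.
  exists (x / t); split; last by rewrite mulfVK.
  apply: CR; right; rewrite vM // ?invr_neq0 // vV // vt.
  by move: vx; clear; lia.
move=> [a [ra ->]]; apply: (m_of_val H).
  by apply: RM => //; apply: CR; right; rewrite vt.
have [->|a0] := eqVneq a 0; first by left; rewrite mul0r.
right; rewrite vM // vt; case: (R_ic H ra) => [e|h]; first by move: a0; rewrite e eqxx.
by move: h; clear; lia.
Qed.

Lemma good_ext (K : fieldType) (R : K -> Prop) (v : K -> int) (c : nat) (M M' : K -> Prop) :
  (forall x, M x <-> M' x) -> good R v c M -> good R v c M'.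
Proof.
move=> h [[m0 [mD mM]] mp mC]; split.
- split; first exact/h.
  split; first by move=> x y /h hx /h hy; apply/h; apply: mD.
  by move=> a x ra /h hx; apply/h; apply: mM.
- by move=> x /h; apply: mp.
- by move=> x /mC /h.
Qed.
Lemma window_Am (K : fieldType) (R : K -> Prop) (v : K -> int) (c e : nat) : Ctx R v c e ->
  forall k : nat, (c - e <= k)%N -> valR (colon R (maxideal R)) v k.
Proof.
move=> X k hk; have H := C_H X; have hv := H_val H; have hs := H_sub H.
have [y [y0 vy]] := v_exists hv k%:Z; exists y; split => //.
move=> a ma; have [->|a0] := eqVneq a 0; first by rewrite mulr0; exact: R0.
have [k' [vk sk]] := val_nat H (proj1 ma) a0.
have k1 := m_val H ma a0.
have ek : (e <= k')%N by apply: (Sbig (C_mult X)) => //; move: k1; rewrite vk; clear; lia.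
apply: (C_CR X); right; rewrite vM // vy vk; move: hk ek; clear; lia.
Qed.

Lemma R_Am (K : fieldType) (R : K -> Prop) : subring R -> forall y, R y -> colon R (maxideal R) y.
Proof. by move=> hs; apply: colon_R hs _ => a []. Qed.

Lemma rr_count (K : fieldType) (R : K -> Prop) (v : K -> int) (c e : nat) : Ctx R v c e ->
  (cnt v c (colon R (maxideal R)) - cnt v c R)%N =
  count (fun k => `[< valR (colon R (maxideal R)) v k >] && ~~ `[< valR R v k >]) (iota 0 c).
Proof.
move=> X; rewrite /cnt (count_diff (P := fun k => `[< valR R v k >])).
  by rewrite addKn.
move=> k _ /asboolP h; apply/asboolP; apply: valR_mono h; exact: R_Am (H_sub (C_H X)).
Qed.

Lemma F_compl (K : fieldType) (v : K -> int) (c : nat) (M : K -> Prop) :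
  (c - cnt v c M)%N = count (fun k => ~~ `[< valR M v k >]) (iota 0 c).
Proof.
have h := count_predC (fun k => `[< valR M v k >]) (iota 0 c).
rewrite size_iota in h; rewrite /cnt -{1}h addKn.
by apply: eq_count.
Qed.

Lemma A_big (K : fieldType) (R : K -> Prop) (v : K -> int) (c e : nat) : Ctx R v c e ->
  forall i xi, valR R v xi -> sig (valR R v) xi = i ->
  forall k : nat, (c <= xi + k)%N -> valR (colon R (Rsub R v i)) v k.
Proof.
move=> X i xi sxi hxi k hk; have H := C_H X; have hv := H_val H; have hs := H_sub H.
have [y [y0 vy]] := v_exists hv k%:Z; exists y; split => //.
move=> a /(Rsub_iff X sxi hxi) [ra [->|ha]]; first by rewrite mulr0; exact: R0.
apply: (C_CR X); have [->|a0] := eqVneq a 0; first by left; rewrite mulr0.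
right; rewrite vM // vy; move: ha hk; clear; lia.
Qed.

Lemma S_in_A (K : fieldType) (R : K -> Prop) (v : K -> int) (c e : nat) : Ctx R v c e ->
  forall i k, valR R v k -> valR (colon R (Rsub R v i)) v k.
Proof.
move=> X i k; apply: valR_mono => y ry; apply: colon_R (H_sub (C_H X)) _ _ ry.
exact: Rsub_R.
Qed.

Lemma F_steps (K : fieldType) (R : K -> Prop) (v : K -> int) (c e : nat) : Ctx R v c e ->
  forall i, (0 < i <= sig (valR R v) c)%N ->
  (cnt v c (colon R (Rsub R v i)) <= cnt v c (colon R (Rsub R v i.-1)) +
     (cnt v c (colon R (maxideal R)) - cnt v c R))%N.
Proof.
move=> X i hi; have := rho_le X hi.
have : (cnt v c (colon R (Rsub R v i.-1)) <= cnt v c (colon R (Rsub R v i)))%N.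
  by apply: cnt_le; apply: (A_mono X); case/andP: hi.
clear; lia.
Qed.
Lemma count_dvd_block (e m : nat) : (0 < e)%N -> (e %| m)%N ->
  count (fun k => e %| k)%N (iota m e) = 1%N.
Proof.
case: e => // e' _ hm; rewrite /= hm add1n; congr S.
rewrite (eq_in_count (a2 := pred0)) ?count_pred0 //.
move=> k; rewrite mem_iota => /andP [mk km] /=.
apply/negbTE/negP => /dvdnP [b kb]; move/dvdnP: hm => [a ma].
move: mk km; rewrite kb ma => h1 h2.
have ab : (a < b)%N by rewrite -(ltn_pmul2r (ltn0Sn e')); apply: leq_trans h1.
have ba : (b < a.+1)%N by rewrite -(ltn_pmul2r (ltn0Sn e')) mulSn; move: h2; clear; lia.
by move: ab ba; clear; lia.
Qed.

Lemma count_dvd (e q : nat) : (0 < e)%N ->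
  count (fun k => e %| k)%N (iota 0 (q * e)) = q.
Proof.
move=> e0; elim: q => [|q IH]; first by rewrite mul0n.
rewrite mulSnr iotaD count_cat IH add0n count_dvd_block //; first by rewrite addn1.
exact: dvdn_mull.
Qed.

Lemma dir21_gor (K : fieldType) (R : K -> Prop) (v : K -> int) (c e : nat) : Ctx R v c e ->
  (cnt v c (colon R (maxideal R)) - cnt v c R)%N = 1%N ->
  cnt v c (colon R (Rsub R v (sig (valR R v) c))) =
  (cnt v c (colon R (Rsub R v 0)) + sig (valR R v) c * (cnt v c (colon R (maxideal R)) - cnt v c R))%N.
Proof.
move=> X h1.
apply/(tele (F := fun i => cnt v c (colon R (Rsub R v i))) (F_steps X)) => i hi.
have := rho_ge1 X hi; have := F_steps X hi; rewrite h1; clear; lia.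
Qed.
Lemma dir21_shape (K : fieldType) (R : K -> Prop) (v : K -> int) (c e : nat) : Ctx R v c e ->
  forall p : nat, (forall m : nat, valR R v m <->
        ((exists k, (k <= p)%N /\ m = (k * e)%N) \/ ((p.+1 * e) <= m)%N)) ->
  cnt v c (colon R (Rsub R v (sig (valR R v) c))) =
  (cnt v c (colon R (Rsub R v 0)) + sig (valR R v) c * (cnt v c (colon R (maxideal R)) - cnt v c R))%N.
Proof.
move=> X p hsh.
have H := C_H X; have hs := H_sub H; have hv := H_val H.
have [se [e0 emin]] := C_mult X.
have c1 := C_c1 X; have hc := C_cond X; have [sc [hck hcmin]] := hc.
set rr := (cnt v c (colon R (maxideal R)) - cnt v c R)%N.
have e2 : (1 < e)%N.
  rewrite ltnNge; apply/negP => e1.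
  have ee : e = 1%N by move: e0 e1; clear; lia.
  apply: (Snc1 hc c1); apply/hsh; rewrite ee.
  case: (leqP c.-1 p) => h; [left; exists c.-1; rewrite muln1|right; rewrite muln1] => //.
have cE : c = (p.+1 * e)%N.
  apply/eqP; rewrite eqn_leq; apply/andP; split.
    apply: hcmin; first by apply/hsh; right.
    by move=> k; apply/hsh; right; exact: leq_addr.
  rewrite leqNgt; apply/negP => lt.
  have : valR R v (p.+1 * e).-1 by apply: (Sge hc); move: lt; clear; lia.
  move/hsh => [[k [kp ke]]|h].
    have := leq_mul kp (leqnn e); move: ke e2; rewrite mulSn; clear; lia.
  by move: h e0; rewrite mulSn; clear; lia.
have n0E : sig (valR R v) c = p.+1.
  rewrite /sig cE (eq_in_count (a2 := fun k => e %| k)%N) ?count_dvd //.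
  move=> k; rewrite mem_iota add0n => /andP [_ kc]; apply/asboolP/idP.
    move/hsh => [[j [jp ->]]|h]; first exact: dvdn_mull.
    by move: h kc; clear; lia.
  move=> /dvdnP [j kj]; apply/hsh; left; exists j; split => //.
  by rewrite -ltnS -(ltn_pmul2r e0) -kj.
have rr_le : (rr <= e - 1)%N.
  rewrite /rr (rr_count X).
  apply: leq_trans (count_le_in (Q := fun k => (c - e + 1 <= k) && (k < c))%N _) _.
    move=> k; rewrite mem_iota add0n => /andP [_ kc] /andP [/asboolP vA /negP nS].
    rewrite kc andbT.
    case: vA => y [Ay [y0 vy]].
    have [u [ru [u0 vu]]] := se.
    have mu : maxideal R u by apply: (m_of_val H ru); right; rewrite vu; move: e0; clear; lia.
    have ryu := Ay u mu.
    have sk : valR R v (k + e).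
      exists (y * u); split => //; split; first by rewrite mulf_neq0.
      by rewrite vM // vy vu.
    rewrite leqNgt; apply/negP => lt.
    case: (ltnP (k + e) c) => h.
      move/hsh: sk => [[j [jp je]]|h2]; last by move: h2 h; rewrite cE; clear; lia.
      apply: nS; apply/asboolP/hsh; left.
      case: j jp je => [|j] jp je; first by move: je e2; rewrite mul0n; clear; lia.
      exists j; split; first exact: ltnW.
      by move: je; rewrite mulSn; clear; lia.
    apply: nS; apply/asboolP/hsh; left; exists p; split => //.
    by move: h lt; rewrite cE mulSn; clear; lia.
  rewrite count_int; first by clear; lia.
  by move: e0 c1 (e_le_c hc (C_mult X) c1); clear; lia.
have rr_ge : (e - 1 <= rr)%N.
  have := tele_le (F := fun i => cnt v c (colon R (Rsub R v i))) (F_steps X) (leqnn (sig (valR R v) c)).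
  rewrite (cnt_An X) (cnt_A0 X) n0E -/rr => h.
  have : (p.+1 * e <= p.+1 * rr.+1)%N by rewrite mulnS -cE.
  by rewrite leq_pmul2l //; clear; lia.
rewrite (cnt_An X) (cnt_A0 X) n0E -/rr.
have -> : rr = (e - 1)%N by apply/eqP; rewrite eqn_leq rr_le rr_ge.
by rewrite -mulnS cE; congr (_ * _)%N; move: e0; clear; lia.
Qed.
Lemma dir12 (K : fieldType) (R : K -> Prop) (v : K -> int) (c e : nat) : Ctx R v c e ->
  cnt v c (colon R (Rsub R v (sig (valR R v) c))) =
  (cnt v c (colon R (Rsub R v 0)) + sig (valR R v) c * (cnt v c (colon R (maxideal R)) - cnt v c R))%N ->
  (cnt v c (colon R (maxideal R)) - cnt v c R)%N = 1%N \/
  exists p : nat, forall m : nat, valR R v m <->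
        ((exists k, (k <= p)%N /\ m = (k * e)%N) \/ ((p.+1 * e) <= m)%N).
Proof.
move=> X h.
have H := C_H X; have hs := H_sub H; have hv := H_val H.
have [se [e0 emin]] := C_mult X.
have c1 := C_c1 X; have hc := C_cond X.
have sc : valR R v c := Sge hc (leqnn c).
have ec : (e <= c)%N := e_le_c hc (C_mult X) c1.
set rr := (cnt v c (colon R (maxideal R)) - cnt v c R)%N.
set n0 := sig (valR R v) c.
have hF := proj1 (tele (F := fun i => cnt v c (colon R (Rsub R v i))) (F_steps X)) h.
have FAn : cnt v c (colon R (Rsub R v n0)) = c := cnt_An X.
have n0pos : (0 < n0)%N by have := sig_lt (S0 H) c1.
have [s [ss hs_]] := xs_ex X n0.-1.
have sig_c : sig (valR R v) c = (sig (valR R v) s).+1 by rewrite hs_ prednK.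
have slc : (s < c)%N by apply: (xs_lt ss sc); rewrite sig_c.
have hsmax : forall z, valR R v z -> (s < z)%N -> (c <= z)%N := fun z sz => next_elem ss sc sz sig_c.
have hse : (c - e <= s)%N.
  have sq := Smul H se (c.-1 %/ e).
  have qc : (c.-1 %/ e * e < c)%N by move: e0 c1; clear; lia.
  have qs : (c.-1 %/ e * e <= s)%N.
    by rewrite leqNgt; apply/negP => lt; have := hsmax _ sq lt; rewrite leqNgt qc.
  by move: qs e0 c1; clear; lia.
have r1 : (1 <= rr)%N.
  rewrite /rr (rr_count X).
  have := count_lt_in (s := iota 0 c) (P := pred0)
    (Q := fun k => `[< valR (colon R (maxideal R)) v k >] && ~~ `[< valR R v k >]) _ _.
  rewrite count_pred0; apply => //.
  exists c.-1; split; first by rewrite mem_iota add0n; move: c1; clear; lia.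
  split => //; apply/andP; split.
    by apply/asboolP; apply: (window_Am X); move: e0; clear; lia.
  by apply/negP => /asboolP; apply: Snc1.
have Qsub : forall k, k \in iota 0 c -> ((s.+1 <= k) && (k < c))%N ->
    `[< valR (colon R (maxideal R)) v k >] && ~~ `[< valR R v k >].
  move=> k _ /andP [sk kc]; apply/andP; split.
    by apply/asboolP; apply: (window_Am X); move: sk hse; clear; lia.
  by apply/negP => /asboolP /hsmax /(_ sk); rewrite leqNgt kc.
have rA : (c - s.+1 <= rr)%N.
  rewrite /rr (rr_count X) -(count_int (a := s.+1) (b := c) (c := c)); last by rewrite slc leqnn.
  exact: count_le_in.
have e1 : c = (cnt v c (colon R (Rsub R v n0.-1)) + rr)%N.
  by rewrite -{1}FAn; apply: hF; rewrite n0pos leqnn.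
have Fn1 : cnt v c (colon R (Rsub R v n0.-1)) = (c - rr)%N.
  move: e1; move: (cnt v c (colon R (Rsub R v n0.-1))) => F1; clear; lia.
have rc : (rr <= c)%N by move: e1; move: (cnt v c (colon R (Rsub R v n0.-1))) => F1; clear; lia.
have rB : (rr <= c - s - 1)%N.
  have : (rr = c - cnt v c (colon R (Rsub R v n0.-1)))%N by rewrite Fn1; move: rc; clear; lia.
  move=> ->; rewrite F_compl.
  apply: leq_trans (count_le_in (Q := fun k => (1 <= k) && (k < c - s))%N _) _.
    move=> k; rewrite mem_iota add0n => /andP [_ kc] /negP nA; apply/andP; split.
      case: k {kc} nA => // nA; exfalso; apply: nA; apply/asboolP; apply: (S_in_A X); exact: S0 H.
    rewrite ltnNge; apply/negP => le; apply: nA; apply/asboolP.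
    by apply: (A_big X ss hs_); move: le slc; clear; lia.
  by rewrite count_int; [clear; lia|move: slc; clear; lia].
have win : forall k, (c - e <= k)%N -> (k <= s)%N -> valR R v k.
  move=> k h1 h2; case: (EM (valR R v k)) => // nk; exfalso.
  move: h2; rewrite leq_eqVlt => /orP [/eqP ks|ks]; first by apply: nk; rewrite ks.
  have : (c - s.+1 < rr)%N.
    rewrite /rr (rr_count X) -(count_int (a := s.+1) (b := c) (c := c)); last by rewrite slc leqnn.
    apply: count_lt_in; first exact: Qsub.
    exists k; split; first by rewrite mem_iota add0n; move: ks slc; clear; lia.
    split; last by apply/negP => /andP [h3 _]; move: h3 ks; clear; lia.
    apply/andP; split; first by apply/asboolP; apply: (window_Am X).
    by apply/negP => /asboolP.
  by move: rB slc; clear; lia.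
have [r_1|rn1] := eqVneq rr 1%N; [by left|right].
have sE : s = (c - e)%N.
  apply/eqP; rewrite eqn_leq hse andbT leqNgt; apply/negP => lt.
  have ss1 : valR R v s.-1 by apply: win; move: lt; clear; lia.
  have sig1 : sig (valR R v) s = (sig (valR R v) s.-1).+1.
    have := sigS (valR R v) s.-1; rewrite prednK; last by move: lt; clear; lia.
    by move=> ->; case: asboolP => // _; rewrite addn1.
  have n02 : (1 < n0)%N by move: sig1; rewrite hs_; clear; lia.
  have hs2 : sig (valR R v) s.-1 = n0.-2 by move: sig1; rewrite hs_; clear; lia.
  have e2 : cnt v c (colon R (Rsub R v n0.-1)) = (cnt v c (colon R (Rsub R v n0.-2)) + rr)%N.
    by apply: hF; move: n02; clear; lia.
  have rc2 : (rr + rr <= c)%N.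
    move: e2; rewrite Fn1; move: (cnt v c (colon R (Rsub R v n0.-2))) => F2.
    by move: rc; clear; lia.
  have Fn2 : cnt v c (colon R (Rsub R v n0.-2)) = (c - rr - rr)%N.
    move: e2; rewrite Fn1; move: (cnt v c (colon R (Rsub R v n0.-2))) => F2.
    by move: rc; clear; lia.
  have : (rr + rr <= c - s)%N.
    have : (rr + rr = c - cnt v c (colon R (Rsub R v n0.-2)))%N.
      rewrite Fn2; move: rc2; clear; lia.
    move=> ->; rewrite F_compl.
    apply: leq_trans (count_le_in (Q := fun k => (1 <= k) && (k < c - s + 1))%N _) _.
      move=> k; rewrite mem_iota add0n => /andP [_ kc] /negP nA; apply/andP; split.
        case: k {kc} nA => // nA; exfalso; apply: nA; apply/asboolP; apply: (S_in_A X); exact: S0 H.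
      rewrite ltnNge; apply/negP => le; apply: nA; apply/asboolP.
      by apply: (A_big X ss1 hs2); move: le slc lt; clear; lia.
    by rewrite count_int; [clear; lia|move: slc lt; clear; lia].
  by move: rA rB r1 rn1 slc; clear; lia.
have gaps : forall k, (c - e < k)%N -> (k < c)%N -> ~ valR R v k.
  by move=> k h1 h2 sk; have := hsmax k sk; rewrite sE => /(_ h1); rewrite leqNgt h2.
have key : forall z, valR R v z -> (z < c)%N -> (z + (c.-1 - z) %/ e * e = c - e)%N.
  move=> z sz zc.
  have sw : valR R v (z + (c.-1 - z) %/ e * e)%N by apply: (Sadd H sz); apply: (Smul H se).
  have b1 : (c - e <= z + (c.-1 - z) %/ e * e < c)%N by move: zc e0 ec; clear; lia.
  case/andP: b1 => b1 b2; move: b1; rewrite leq_eqVlt => /orP [/eqP -> //|b1].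
  by exfalso; apply: (gaps _ b1 b2).
have k0 := key 0%N (S0 H) c1; rewrite add0n subn0 in k0.
exists (c.-1 %/ e)%N => m; split.
  move=> sm; case: (ltnP m c) => mc.
    left; exists (c.-1 %/ e - (c.-1 - m) %/ e)%N; split; first exact: leq_subr.
    by rewrite mulnBl; move: (key m sm mc) k0; clear; lia.
  by right; rewrite mulSn k0; move: mc ec; clear; lia.
move=> [[k [kp ->]]|hm]; first exact: Smul.
by apply: (Sge hc); move: hm; rewrite mulSn k0; move: ec; clear; lia.
Qed.

Unset Implicit Arguments.

Theorem theorem3p1 (K : fieldType) (R : K -> Prop) (v : K -> int)
    (c delta r e : nat) :
  subring R ->
  is_quotient_field R ->
  is_local R ->
  noetherian R ->
  krull_dim_one R ->
  ~ regular R ->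
  (* analytically irreducible: intcl R is a DVR with normalized valuation v,
     and a finite R-module *)
  normalized_dvaluation v ->
  (forall x, intcl R x <-> (x = 0 \/ 0 <= v x)) ->
  (exists s : seq K, forall x, intcl R x <-> rspan R s x) ->
  (* residually rational *)
  (forall x, intcl R x -> exists a, R a /\ (x - a = 0 \/ 1 <= v (x - a))) ->
  is_conductor (valR R v) c ->
  length_eq R R (intcl R) delta ->
  length_eq R R (colon R (maxideal R)) r ->
  is_multiplicity (valR R v) e ->
  let b : int := ((c%:Z - delta%:Z) * r%:Z - delta%:Z)%R in
  let cond2 := r = 1%N \/
      exists p : nat, forall m : nat, valR R v m <->
        ((exists k, (k <= p)%N /\ m = (k * e)%N) \/ ((p.+1 * e) <= m)%N) in
  let cond3 := forall i : nat, (1 <= i <= c - delta)%N ->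
      length_eq R (colon R (Rsub R v i.-1)) (colon R (Rsub R v i)) r in
  (b = 0 <-> cond2) /\ (b = 0 <-> cond3).
Proof.
move=> hs hq _ _ _ hnr hv hic hfin hres hcond hdelta hr hmult b cond2 cond3.
have H : Hyp R v := mkHyp hs hv hic hres.
have [N0 hN0] := cond_ex H hq hfin.
have CR := C_in_R H hcond hN0.
have c1 := c_pos H CR hnr.
have X : Ctx R v c e := mkCtx H hcond CR c1 hmult.
have n0c : (sig (valR R v) c <= c)%N.
  by rewrite /sig; have := count_size (fun k => `[< valR R v k >]) (iota 0 c); rewrite size_iota.
have gI : good R v c (intcl R) := good_ext (fun x => iff_sym (hic x)) (Rb_good X).
have cI : cnt v c (intcl R) = c by rewrite (cnt_ext v c (I := Rb v)) ?(cnt_Rb X).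
have RI : forall x, R x -> intcl R x := fun x rx => proj2 (hic x) (R_ic H rx).
have dE : delta = (c - sig (valR R v) c)%N.
  by have := len_uniq hdelta (len_count H (R_good X) gI RI); rewrite cI.
have rE : r = (cnt v c (colon R (maxideal R)) - cnt v c R)%N.
  exact: len_uniq hr (len_count H (R_good X) (Am_good X) (R_Am hs)).
have tel := tele (F := fun i => cnt v c (colon R (Rsub R v i))) (F_steps X).
rewrite -rE (cnt_An X) (cnt_A0 X) in tel.
have bE : b = 0 <-> c = (sig (valR R v) c + sig (valR R v) c * r)%N.
  rewrite /b dE.
  have e1 : (c%:Z - (c - sig (valR R v) c)%N%:Z) = (sig (valR R v) c)%:Z.
    by move: n0c; clear; lia.
  rewrite e1 -PoszM; move: (sig (valR R v) c * r)%N n0c => t; clear; lia.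
have hc3 : cond3 <-> (forall i, (0 < i <= sig (valR R v) c)%N ->
    cnt v c (colon R (Rsub R v i)) = (cnt v c (colon R (Rsub R v i.-1)) + r)%N).
  rewrite /cond3.
  have ee : (c - delta = sig (valR R v) c)%N by rewrite dE; move: n0c; clear; lia.
  rewrite ee; split => h i hi.
    have i0 : (0 < i)%N by case/andP: hi.
    have ic : (i <= sig (valR R v) c)%N by case/andP: hi.
    have ic' : (i.-1 <= sig (valR R v) c)%N by apply: leq_trans (leq_pred _) ic.
    have := len_uniq (h i hi) (len_count H (A_good X ic') (A_good X ic) (A_mono X i0)).
    have := cnt_le v c (A_mono X i0); clear; lia.
  have i0 : (0 < i)%N by case/andP: hi.
  have ic : (i <= sig (valR R v) c)%N by case/andP: hi.
  have ic' : (i.-1 <= sig (valR R v) c)%N by apply: leq_trans (leq_pred _) ic.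
  have := len_count H (A_good X ic') (A_good X ic) (A_mono X i0).
  by rewrite (h i hi) addKn.
split.
  rewrite bE; split.
    move=> h; have := dir12 X; rewrite -rE (cnt_An X) (cnt_A0 X) => /(_ h).
    by [].
  case=> [r1|[p hp]].
    by have := dir21_gor X; rewrite -rE (cnt_An X) (cnt_A0 X) => /(_ r1).
  by have := dir21_shape X hp; rewrite -rE (cnt_An X) (cnt_A0 X).
rewrite bE hc3; exact: tel.
Qed.
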